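(* Let $\mathcal I,\mathcal J$ be ideals on $\omega$. Then (1) $\mathfrak b_\sigma(\mathcal I,\mathcal J)=\min\{\mathfrak b_s(\mathcal I\cap\mathcal J,\mathcal J,\mathcal I),\mathrm{add}_\omega(\mathcal I,\mathcal J)\}$; (2) $\mathfrak b_\sigma(\mathcal I)=\min\{\mathfrak b_s(\mathcal I),\mathrm{add}_\omega(\mathcal I)\}$.
   Context: An ideal on $\omega$ is a family $\mathcal I\subseteq\mathcal P(\omega)$ closed under finite unions and subsets, containing all finite sets, with $\omega\notin\mathcal I$. Convention: $\min\emptyset=\infty$ and $\kappa<\infty$ for every cardinal $\kappa$. $\widehat{\mathcal P}_{\mathcal I}$ = sequences $(A_n)\in\mathcal I^\omega$ of pairwise disjoint sets; $\mathcal P_{\mathcal I}$ = those with $\bigcup_nA_n=\omega$; $\mathcal M_{\mathcal I}$ = sequences $(E_k)\in\mathcal I^\omega$ with $E_k\subseteq E_{k+1}$ for all $k$. $\mathfrak b_s(\mathcal I,\mathcal J,\mathcal K)=\min\{|\mathcal E|:\mathcal E\subseteq\widehat{\mathcal P}_{\mathcal K}$ and for every $(A_n)\in\mathcal P_{\mathcal J}$ there is $(E_n)\in\mathcal E$ with $\bigcup_n(A_{n+1}\cap\bigcup_{i\le n}E_i)\notin\mathcal I\}$; $\mathfrak b_\sigma(\mathcal I,\mathcal J)=\min\{|\mathcal E|:\mathcal E\subseteq\mathcal M_{\mathcal I}$ and for every $(A_n)\in\mathcal M_{\mathcal J}$ there is $(E_n)\in\mathcal E$ with $E_n\not\subseteq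 A_n$ for infinitely many $n\}$; $\mathrm{add}_\omega(\mathcal I,\mathcal J)=\min\{|\mathcal A|:\mathcal A\subseteq\mathcal I$ and for every $(B_n)\in\mathcal J^\omega$ there is $A\in\mathcal A$ with $A\not\subseteq B_n$ for all $n\}$. $\mathfrak b_s(\mathcal I)=\mathfrak b_s(\mathcal I,\mathcal I,\mathcal I)$, $\mathfrak b_\sigma(\mathcal I)=\mathfrak b_\sigma(\mathcal I,\mathcal I)$, $\mathrm{add}_\omega(\mathcal I)=\mathrm{add}_\omega(\mathcal I,\mathcal I)$. *)

(* Defs.v *)
From mathcomp Require Import all_boot all_order.
From mathcomp Require Import boolp classical_sets cardinality.
Set Implicit Arguments. Unset Strict Implicit. Unset Printing Implicit Defensive.
Local Open Scope classical_set_scope.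
Local Open Scope card_scope.

Definition is_ideal (I : set (set nat)) : Prop :=
  (forall A B, I A -> I B -> I (A `|` B)) /\
  (forall A B, B `<=` A -> I A -> I B) /\
  (forall A, finite_set A -> I A) /\
  ~ I [set: nat].

Definition hatP (K : set (set nat)) (A : nat -> set nat) : Prop :=
  (forall n, K (A n)) /\ (forall m n, m <> n -> A m `&` A n = set0).

Definition partP (J : set (set nat)) (A : nat -> set nat) : Prop :=
  hatP J A /\ \bigcup_n A n = [set: nat].

Definition incM (I : set (set nat)) (E : nat -> set nat) : Prop :=
  (forall k, I (E k)) /\ (forall k, E k `<=` E k.+1).

(* Families witnessing b_s(I,J,K): the cardinal b_s(I,J,K) is the least
   cardinality of such a family (infinity if there is none). *)
Definition bs_family (I J K : set (set nat)) (F : set (nat -> set nat)) : Prop :=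
  F `<=` hatP K /\
  forall A, partP J A -> exists2 E, F E &
    ~ I (\bigcup_n (A n.+1 `&` \bigcup_(i in [set i | (i <= n)%N]) E i)).

Definition bsigma_family (I J : set (set nat)) (F : set (nat -> set nat)) : Prop :=
  F `<=` incM I /\
  forall A, incM J A -> exists2 E, F E & infinite_set [set n | ~ (E n `<=` A n)].

Definition addw_family (I J : set (set nat)) (F : set (set nat)) : Prop :=
  F `<=` I /\
  forall B : nat -> set nat, (forall n, J (B n)) ->
    exists2 A, F A & forall n, ~ (A `<=` B n).

(* Comparison of minima of classes of cardinalities, with min(empty) = infinity.
   min_le W1 W2 : min{|X| : W1 X} <= min{|Y| : W2 Y}. *)
Definition min_le T U (W1 : set (set T)) (W2 : set (set U)) : Prop :=
  forall Y, W2 Y -> exists X, W1 X /\ (X #<= Y).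

(* min2_le W1 W2 W3 : min{ min W1, min W2 } <= min W3. *)
Definition min2_le T U V (W1 : set (set T)) (W2 : set (set U))
  (W3 : set (set V)) : Prop :=
  forall Z, W3 Z ->
    (exists X, W1 X /\ (X #<= Z)) \/ (exists Y, W2 Y /\ (Y #<= Z)).

(* min W3 = min{ min W1, min W2 } *)
Definition min_eq_min2 T U V (W3 : set (set V)) (W1 : set (set T))
  (W2 : set (set U)) : Prop :=
  min_le W3 W1 /\ min_le W3 W2 /\ min2_le W1 W2 W3.

(* Main.v *)
Require Import Defs.
From mathcomp Require Import all_boot all_order.
From mathcomp Require Import boolp classical_sets cardinality.
Set Implicit Arguments. Unset Strict Implicit.
Local Open Scope classical_set_scope.

Section Aux.
Lemma NNPP (P : Prop) : ~ ~ P -> P.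
Proof. by move=> h; case: (pselect P) => // /h. Qed.
Lemma ideal_sub (I : set (set nat)) A B : is_ideal I -> A `<=` B -> I B -> I A.
Proof. by move=> [_ [h _]] AB IB; exact: h AB IB. Qed.
Lemma ideal_U (I : set (set nat)) A B : is_ideal I -> I A -> I B -> I (A `|` B).
Proof. by move=> [h _]; exact: h. Qed.
Lemma ideal_fin (I : set (set nat)) A : is_ideal I -> finite_set A -> I A.
Proof. by move=> [_ [_ [h _]]]; exact: h. Qed.

Definition cum (E : nat -> set nat) n := \bigcup_(i in [set i | (i <= n)%N]) E i.
Definition Dj (E : nat -> set nat) n := if n is m.+1 then E m.+1 `\` E m else E 0.

Lemma mono_sub (f : nat -> set nat) : (forall k, f k `<=` f k.+1) ->
  forall m n, (m <= n)%N -> f m `<=` f n.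
Proof.
move=> h m; elim=> [|n IH] mn.
  by move: mn; rewrite leqn0 => /eqP ->.
move: mn; rewrite leq_eqVlt => /orP[/eqP->//|mn].
by apply: subset_trans (IH mn) (h n).
Qed.

Lemma cum_inc E k : cum E k `<=` cum E k.+1.
Proof. by move=> x [i Hi Ex]; exists i => //=; apply: leqW. Qed.

Lemma cum_in (I : set (set nat)) E n : is_ideal I -> (forall n, I (E n)) -> I (cum E n).
Proof.
move=> hI hE; elim: n => [|n IH].
  apply: (ideal_sub hI _ (hE 0)) => x [i /= Hi Ex].
  by move: Hi; rewrite leqn0 => /eqP Hi; rewrite -Hi.
apply: (ideal_sub hI _ (ideal_U hI IH (hE n.+1))) => x [i /= Hi Ex].
move: Hi; rewrite leq_eqVlt => /orP[/eqP Hi|Hi]; first by right; rewrite -Hi.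
by left; exists i.
Qed.

Lemma Dj_sub E n : Dj E n `<=` E n.
Proof. by case: n => [|m] //= x []. Qed.

Lemma Dj_disj E : (forall k, E k `<=` E k.+1) ->
  forall m n, m <> n -> Dj E m `&` Dj E n = set0.
Proof.
move=> hE.
suff H : forall m n, (m < n)%N -> Dj E m `&` Dj E n = set0.
  move=> m n /eqP; rewrite neq_ltn => /orP[/H//|/H]; by rewrite setIC.
move=> m [|n] //= mn; apply/seteqP; split => // x [Dm [_ nE]].
by apply: nE; move: mn; rewrite ltnS => mn; apply: (mono_sub hE mn); apply: Dj_sub.
Qed.

Lemma Dj_cover E n x : E n x -> exists2 i, (i <= n)%N & Dj E i x.
Proof.
elim: n => [|n IH] h; first by exists 0.
case: (pselect (E n x)) => [/IH [i Hi Di]|nx]; first by exists i => //; apply: leqW.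
by exists n.+1.
Qed.

Lemma nat_finite_bound (S : set nat) : finite_set S -> exists N, forall n, S n -> (n < N)%N.
Proof.
move/finite_fsetP=> [X ->].
have [N HN] : exists N, forall x, x \in (finmap.enum_fset X) -> (x < N)%N.
  elim: (finmap.enum_fset X) => [|a s [N HN]]; first by exists 0.
  exists (maxn a.+1 N) => x; rewrite inE => /orP[/eqP->|/HN]; first by rewrite leq_max leqnn.
  by move=> xN; rewrite leq_max xN orbT.
by exists N => n /= Hn; apply: HN.
Qed.
End Aux.

Lemma partb (I J : set (set nat)) : min_le (bsigma_family I J) (addw_family I J).
Proof.
move=> Y [YI HY]; exists ((fun A => fun _ : nat => A) @` Y); split; last exact: card_image_le.
split.
  by move=> _ [A YA <-]; split=> [k|k //]; exact: YI.
move=> A [AJ Ainc]; have [C YC HC] := HY A AJ.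
exists (fun _ => C); first by exists C.
have -> : [set n | ~ (C `<=` A n)] = setT by apply/seteqP; split => // n _; exact: HC.
exact: infinite_nat.
Qed.

Lemma parta (I J : set (set nat)) : is_ideal I -> is_ideal J ->
  min_le (bsigma_family I J) (bs_family (I `&` J) J I).
Proof.
move=> hI hJ F [FI HF]; exists (cum @` F); split; last exact: card_image_le.
split.
  move=> _ [E FE <-]; split; last exact: cum_inc.
  by move=> k; apply: (cum_in k hI); exact: (FI E FE).1.
move=> A [AJ Ainc].
pose A' n := A n `|` [set i | (i <= n)%N].
have A'J : forall n, J (A' n).
  move=> n; apply: (ideal_U hJ (AJ n) _); apply: (ideal_fin hJ _).
  exact: (finite_II n.+1).
have A'inc : forall k, A' k `<=` A' k.+1.
  move=> k x [Ax|xk]; [left; exact: Ainc | right; exact: leqW].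
have PJ : partP J (Dj A').
  split; first split.
  - by move=> n; apply: (ideal_sub hJ _ (A'J n)); exact: Dj_sub.
  - exact: Dj_disj.
  apply/seteqP; split => // x _.
  have [i _ Di] := @Dj_cover A' x x (or_intror (leqnn x)).
  by exists i.
have [E FE HS] := HF _ PJ.
exists (cum E); first by exists E.
move=> fin; have [N HN] := nat_finite_bound fin; apply: HS.
have key : forall n, (N <= n)%N -> cum E n `<=` A n.
  move=> n Nn x Ex; apply: NNPP => nA.
  have := HN n (fun sub => nA (sub x Ex)); by rewrite ltnNge Nn.
set S := (X in (I `&` J) X).
have sub : S `<=` A' N `&` cum E N.
  move=> x [n _ [Pn cn]].
  case: (leqP N n) => h.
    by exfalso; case: Pn => _; apply; left; exact: key.
  split; first by apply: (mono_sub A'inc h); exact: Dj_sub.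
  by apply: (mono_sub (@cum_inc E) (ltnW h)).
split.
  by apply: (ideal_sub hI (subset_trans sub (@subIsetr _ _ _)) _); apply: (cum_in N hI); exact: (FI E FE).1.
by apply: (ideal_sub hJ (subset_trans sub (@subIsetl _ _ _)) (A'J N)).
Qed.

Lemma partc (I J : set (set nat)) : is_ideal I -> is_ideal J ->
  min2_le (bs_family (I `&` J) J I) (addw_family I J) (bsigma_family I J).
Proof.
move=> hI hJ Z [ZI HZ].
have DZ : Dj @` Z `<=` hatP I.
  move=> _ [E ZE <-]; split; last exact: Dj_disj (ZI E ZE).2.
  by move=> n; apply: (ideal_sub hI _ ((ZI E ZE).1 n)); exact: Dj_sub.
case: (pselect (bs_family (I `&` J) J I (Dj @` Z))) => [bs|nbs].
  by left; exists (Dj @` Z); split => //; exact: card_image_le.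
right.
pose SD (A E : nat -> set nat) :=
  \bigcup_n (A n.+1 `&` \bigcup_(i in [set i | (i <= n)%N]) Dj E i).
have [A [PA HA]] : exists A, partP J A /\ forall E, Z E -> (I `&` J) (SD A E).
  apply: NNPP => hn; apply: nbs; split; first exact: DZ.
  move=> A PA; apply: NNPP => hn2; apply: hn; exists A; split=> // E ZE.
  apply: NNPP => hS; apply: hn2; exists (Dj E) => //; by exists E.
exists ((SD A) @` Z); split; last exact: card_image_le.
split.
  by move=> _ [E ZE <-]; exact: (HA E ZE).1.
move=> B BJ; apply: NNPP => hn.
have hB : forall E, Z E -> exists k, SD A E `<=` B k.
  move=> E ZE; apply: NNPP => h; apply: hn; exists (SD A E); first by exists E.
  by move=> n sub; apply: h; exists n.
pose C := cum (fun i => A i `|` B i).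
have CJ : incM J C.
  split; last exact: cum_inc.
  move=> k; apply: (cum_in k hJ) => i; apply: (ideal_U hJ _ (BJ i)).
  exact: (PA.1.1 i).
have [E ZE Hinf] := HZ C CJ.
have [k Hk] := hB E ZE.
apply: Hinf; apply: (sub_finite_set _ (finite_II k)) => n /= nsub.
rewrite ltnNge; apply/negP => kn; apply: nsub => x Ex.
have : [set: nat] x by [].
rewrite -PA.2 => -[m _ Am].
case: (leqP m n) => mn; first by exists m => //; left.
exists k => //; right; apply: Hk.
case: m Am mn => [|m'] Am mn //.
exists m' => //; split => //.
have Em' : E m' x by move: mn; rewrite ltnS => mn; apply: (mono_sub (ZI E ZE).2 mn).
have [i Hi Di] := Dj_cover Em'.
by exists i.
Qed.

Lemma part1 (I J : set (set nat)) : is_ideal I -> is_ideal J ->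
  min_eq_min2 (bsigma_family I J) (bs_family (I `&` J) J I) (addw_family I J).
Proof.
move=> hI hJ; split; first exact: parta.
split; first exact: partb.
exact: partc.
Qed.

Theorem theorem5p2 (I J : set (set nat)) :
  is_ideal I -> is_ideal J ->
  min_eq_min2 (bsigma_family I J) (bs_family (I `&` J) J I) (addw_family I J) /\
  min_eq_min2 (bsigma_family I I) (bs_family I I I) (addw_family I I).
Proof.
move=> hI hJ; split; first exact: part1.
by have := part1 hI hI; rewrite setIid.
Qed.
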